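(* For every $k\ge 3$, $$\sum_{n\ge0}|S_n(123,\,3214,\,21(k+1)k(k-1)\cdots 43)|\,x^n=\frac{1-2x+x^k}{1-3x+x^2+x^k}.$$ *)

(* Defs.v *)
From mathcomp Require Import all_boot all_order all_algebra all_fingroup.
Set Implicit Arguments. Unset Strict Implicit. Unset Printing Implicit Defensive.
Import GRing.Theory Num.Theory.

(* A pattern is given in one-line notation as a sequence of naturals
   (e.g. [:: 1; 2; 3] for 123). *)
Definition contains (n : nat) (s : 'S_n) (p : seq nat) : bool :=
  [exists f : {ffun 'I_(size p) -> 'I_n},
     [forall i : 'I_(size p), forall j : 'I_(size p),
        ((i < j)%N ==> (f i < f j)%N) &&
        ((s (f i) < s (f j))%N == (nth 0 p i < nth 0 p j)%N)]].

Definition avoids (n : nat) (s : 'S_n) (P : seq (seq nat)) : bool :=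
  all (fun p => ~~ contains s p) P.

Definition Sn_count (P : seq (seq nat)) (n : nat) : nat :=
  #|[set s : 'S_n | avoids s P]|.

Definition sigma_k (k : nat) : seq nat :=
  [:: 2; 1] ++ [seq (k.+1 - i)%N | i <- iota 0 (k.-1)].

Definition den_coef (k i : nat) : int :=
  (i == 0%N)%:Z - 3 * (i == 1%N)%:Z + (i == 2%N)%:Z + (i == k)%:Z.
Definition num_coef (k i : nat) : int :=
  (i == 0%N)%:Z - 2 * (i == 1%N)%:Z + (i == k)%:Z.

Definition pat123 : seq nat := [:: 1; 2; 3].
Definition pat3214 : seq nat := [:: 3; 2; 1; 4].

(* Main.v *)
Require Import Defs.
From mathcomp Require Import all_boot all_order all_algebra all_fingroup.
From mathcomp Require Import zify.
Import GRing.Theory Num.Theory.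
Set Implicit Arguments. Unset Strict Implicit. Unset Printing Implicit Defensive.
Local Open Scope nat_scope.

Definition ins (n q : nat) (t : seq nat) := take q t ++ n :: drop q t.

Fixpoint PL (n : nat) : seq (seq nat) :=
  match n with
  | 0 => [:: [::]]
  | m.+1 => [seq ins m q t | t <- PL m, q <- iota 0 m.+1]
  end.

Lemma size_ins n q t : size (ins n q t) = (size t).+1.
Proof. by rewrite /ins size_cat /= size_take size_drop; case: ltnP; lia. Qed.

Lemma perm_ins n q t : perm_eq (ins n q t) (n :: t).
Proof.
by rewrite /ins -[n :: drop q t]cat1s perm_catCA /= cat_take_drop.
Qed.

Lemma nth_ins n q t j : q <= size t ->
  nth 0 (ins n q t) j = if j < q then nth 0 t j else if j == q then n else nth 0 t j.-1.
Proof.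
move=> hq; rewrite /ins nth_cat size_take.
have -> : (if q < size t then q else size t) = q by case: ltnP; lia.
case: ltnP => hj; first by rewrite nth_take.
case: eqP => [->|hne]; first by rewrite subnn.
have -> : j - q = (j - q).-1.+1 by lia.
rewrite /= nth_drop; congr nth; lia.
Qed.

Lemma iota_perm_split n : perm_eq (n :: iota 0 n) (iota 0 n.+1).
Proof. by rewrite -addn1 iotaD /= add0n cats1 perm_sym perm_rcons. Qed.

Lemma mem_PL n t : (t \in PL n) = perm_eq t (iota 0 n).
Proof.
elim: n t => [|n IH] t.
  by rewrite inE; apply/eqP/idP => [->//|]; move/perm_size; case: t.
apply/idP/idP.
  case/flatten_mapP => t0; rewrite IH => ht0 /mapP [q _ ->].
  apply: (perm_trans (perm_ins _ _ _)).
  have h : perm_eq (n :: t0) (n :: iota 0 n) by rewrite perm_cons.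
  exact: perm_trans h (iota_perm_split n).
move=> hu.
have hn : n \in t by rewrite (perm_mem hu) mem_iota; lia.
set q := index n t.
have hq : q < size t by rewrite index_mem.
set t0 := take q t ++ drop q.+1 t.
have ht : t = ins n q t0.
  rewrite /ins /t0 take_size_cat ?size_take ?hq //.
  rewrite drop_size_cat ?size_take ?hq //.
  rewrite -{1}(cat_take_drop q t); congr cat.
  rewrite (drop_nth 0 hq) nth_index //.
have hp : perm_eq t0 (iota 0 n).
  rewrite -(perm_cons n).
  have h1 : perm_eq (n :: t0) t by rewrite perm_sym; move: (perm_ins n q t0); rewrite -ht.
  have h2 := perm_trans h1 hu.
  rewrite perm_sym in h2; rewrite perm_sym; exact: perm_trans (iota_perm_split n) h2.
apply/flatten_mapP; exists t0; first by rewrite IH.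
apply/mapP; exists q => //; rewrite mem_iota /=.
have := perm_size hp; rewrite size_iota => hs.
have := perm_size hu; rewrite size_iota => hs'. lia.
Qed.

Lemma ins_inj n q1 q2 t1 t2 : n \notin t1 -> n \notin t2 ->
  q1 <= size t1 -> q2 <= size t2 -> ins n q1 t1 = ins n q2 t2 -> q1 = q2 /\ t1 = t2.
Proof.
move=> h1 h2 s1 s2 e.
have ix : forall q t, n \notin t -> q <= size t -> index n (ins n q t) = q.
  move=> q t hn hq; rewrite /ins index_cat.
  have -> : (n \in take q t) = false by apply/negP => /mem_take; apply/negP.
  by rewrite /= eqxx addn0 size_take; case: ifP => // h; apply/eqP; rewrite eqn_leq hq leqNgt h.
have eq12 : q1 = q2 by rewrite -(ix q1 t1) // e ix.
split=> //; subst q2.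
have tk : forall q t, q <= size t -> take q (ins n q t) = take q t.
  by move=> q t hq; rewrite /ins take_size_cat // size_take; case: ltnP; lia.
have dr : forall q t, q <= size t -> drop q.+1 (ins n q t) = drop q t.
  move=> q t hq; rewrite /ins -cat_rcons drop_size_cat // size_rcons size_take; case: ltnP; lia.
by rewrite -(cat_take_drop q1 t1) -(cat_take_drop q1 t2) -tk // -dr // e tk // dr.
Qed.

Lemma PL_uniq n : uniq (PL n).
Proof.
elim: n => [//|n IH].
apply: (allpairs_uniq IH (iota_uniq 0 n.+1)).
move=> [t1 q1] [t2 q2] H1 H2.
case: (allpairsP H1) => [[a b] /= [ha hb [-> ->]]].
case: (allpairsP H2) => [[c d] /= [hc hd [-> ->]]] /= e.
move: ha hc; rewrite !mem_PL => ha hc.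
have nn : forall t, perm_eq t (iota 0 n) -> n \notin t.
  by move=> t ht; rewrite (perm_mem ht) mem_iota; lia.
have sz : forall t, perm_eq t (iota 0 n) -> size t = n.
  by move=> t /perm_size; rewrite size_iota.
move: hb hd; rewrite -[0 :: iota 1 n]/(iota 0 n.+1) !mem_iota /= => hb hd.
have hb' : b <= size a by rewrite sz //; lia.
have hd' : d <= size c by rewrite sz //; lia.
by have [-> ->] := ins_inj (nn _ ha) (nn _ hc) hb' hd' e.
Qed.

Definition occg (N : nat) (v : nat -> nat) (p : seq nat) (f : nat -> nat) : Prop :=
  [/\ (forall i j, i < j -> j < size p -> f i < f j),
      (forall i, i < size p -> f i < N) &
      (forall i j, i < size p -> j < size p ->
         (v (f i) < v (f j)) = (nth 0 p i < nth 0 p j))].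

Lemma genP N (w : 'I_N -> nat) (v : nat -> nat) (hv : forall o, w o = v o) p :
  reflect (exists f, occg N v p f)
   [exists F : {ffun 'I_(size p) -> 'I_N}, [forall i : 'I_(size p), forall j : 'I_(size p),
      ((i < j) ==> (F i < F j)) && ((w (F i) < w (F j)) == (nth 0 p i < nth 0 p j))]].
Proof.
apply: (iffP idP).
  case/existsP => F /forallP H.
  pose f i := if insub i is Some o then val (F o) else 0.
  have hf : forall i (hi : i < size p), f i = F (Ordinal hi).
    by move=> i hi; rewrite /f insubT.
  exists f; split.
  - move=> i j hij hj; have hi : i < size p by lia.
    rewrite (hf i hi) (hf j hj).
    by have /forallP/(_ (Ordinal hj))/andP[/implyP/(_ hij) ? _] := H (Ordinal hi).
  - by move=> i hi; rewrite (hf i hi).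
  - move=> i j hi hj; rewrite (hf i hi) (hf j hj) -!hv.
    by have /forallP/(_ (Ordinal hj))/andP[_ /eqP] := H (Ordinal hi).
case=> f [h1 h2 h3].
apply/existsP; exists [ffun i : 'I_(size p) => Ordinal (h2 i (ltn_ord i))].
apply/forallP => i; apply/forallP => j; rewrite !ffunE /= !hv.
apply/andP; split; first by apply/implyP => hij; apply: h1.
by rewrite h3.
Qed.

Definition cont (t p : seq nat) := exists f, occg (size t) (fun x => nth 0 t x) p f.

Definition contb (t p : seq nat) : bool :=
  [exists F : {ffun 'I_(size p) -> 'I_(size t)}, [forall i : 'I_(size p), forall j : 'I_(size p),
      ((i < j) ==> (F i < F j)) &&
      ((nth 0 t (F i) < nth 0 t (F j)) == (nth 0 p i < nth 0 p j))]].

Lemma contP t p : reflect (cont t p) (contb t p).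
Proof. exact: (genP (w := fun o => nth 0 t o)). Qed.

Definition lst n (s : 'S_n) : seq nat := [seq val (s i) | i <- enum 'I_n].

Lemma size_lst n (s : 'S_n) : size (lst s) = n.
Proof. by rewrite size_map size_enum_ord. Qed.

Lemma nth_lst n (s : 'S_n) (o : 'I_n) : nth 0 (lst s) o = s o.
Proof.
rewrite /lst (nth_map o) ?size_enum_ord ?ltn_ord //.
by rewrite nth_ord_enum.
Qed.

Lemma contains_lst n (s : 'S_n) p : contains s p = contb (lst s) p.
Proof.
apply/idP/idP.
  move/(@genP n (fun o => val (s o)) (fun x => nth 0 (lst s) x) (fun o => esym (nth_lst s o)) p) => [f hf].
  apply/contP; exists f; by rewrite size_lst.
move/contP => [f hf]; rewrite size_lst in hf.
by apply/(@genP n (fun o => val (s o)) (fun x => nth 0 (lst s) x) (fun o => esym (nth_lst s o)) p); exists f.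
Qed.

Definition avb (P : seq (seq nat)) t := all (fun p => ~~ contb t p) P.

Lemma avoids_lst n (s : 'S_n) P : avoids s P = avb P (lst s).
Proof. by apply: eq_all => p; rewrite contains_lst. Qed.

Lemma lst_inj n : injective (@lst n).
Proof.
move=> s1 s2 e; apply/permP => i; apply: ord_inj; by rewrite -!nth_lst e.
Qed.

Lemma lst_perm n (s : 'S_n) : perm_eq (lst s) (iota 0 n).
Proof.
apply: uniq_perm; last first.
- move=> x; rewrite mem_iota add0n leq0n /=; apply/mapP/idP.
    by case=> i _ ->; rewrite ltn_ord.
  move=> h; exists ((s^-1)%g (Ordinal h)); first by rewrite mem_enum.
  by rewrite permKV.
- exact: iota_uniq.
rewrite /lst map_inj_uniq ?enum_uniq //.
by move=> i j /ord_inj /perm_inj.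
Qed.

Lemma lst_surj n t : perm_eq t (iota 0 n) -> exists s : 'S_n, lst s = t.
Proof.
move=> hp.
have hs : size t = n by rewrite (perm_size hp) size_iota.
have hlt : forall i, i < n -> nth 0 t i < n.
  move=> i hi; have : nth 0 t i \in t by rewrite mem_nth ?hs.
  by rewrite (perm_mem hp) mem_iota.
have hu : uniq t by rewrite (perm_uniq hp) iota_uniq.
pose g (i : 'I_n) : 'I_n := Ordinal (hlt i (ltn_ord i)).
have ginj : injective g.
  move=> i j /(congr1 val) /= e; apply: val_inj => /=.
  by move/eqP: e; rewrite nth_uniq ?hs // => /eqP.
exists (perm ginj); apply: (@eq_from_nth _ 0); first by rewrite size_lst hs.
move=> i; rewrite size_lst => hi.
by rewrite (nth_lst _ (Ordinal hi)) permE.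
Qed.

Lemma Sn_count_PL P n : Sn_count P n = count (avb P) (PL n).
Proof.
rewrite /Sn_count -size_filter cardE.
have e : perm_eq [seq lst s | s <- enum [set s : 'S_n | avoids s P]]
                 (filter (avb P) (PL n)).
  apply: uniq_perm.
  - by rewrite map_inj_uniq ?enum_uniq //; apply: lst_inj.
  - by rewrite filter_uniq // PL_uniq.
  move=> t; rewrite mem_filter mem_PL; apply/mapP/andP.
    by case=> s; rewrite mem_enum inE => hs ->; rewrite -avoids_lst hs lst_perm.
  case=> ha hp; have [s hs] := lst_surj hp.
  by exists s => //; rewrite mem_enum inE avoids_lst hs.
by rewrite -(perm_size e) size_map.
Qed.

Lemma f_ge (p : seq nat) (f : nat -> nat) : (forall i j, i < j -> j < size p -> f i < f j) ->
  forall i, i < size p -> i <= f i.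
Proof.
move=> h; elim=> [//|i IH] hi.
have := h i i.+1 (ltnSn i) hi; have := IH (ltnW hi); lia.
Qed.



Lemma nth_ins_shift n q t x : q <= size t ->
  nth 0 (ins n q t) (if x < q then x else x.+1) = nth 0 t x.
Proof.
move=> hq; rewrite nth_ins //; case: (ltnP x q) => hx; first by rewrite hx.
have -> : (x.+1 < q) = false by apply/negbTE; rewrite -leqNgt; lia.
have -> : (x.+1 == q) = false by apply/negbTE; lia.
by [].
Qed.

Lemma cont_ins_l n q t p : q <= size t -> cont t p -> cont (ins n q t) p.
Proof.
move=> hq [f [h1 h2 h3]].
exists (fun i => if f i < q then f i else (f i).+1); split.
- move=> i j hij hj; have := h1 i j hij hj; case: (ltnP (f i) q); case: (ltnP (f j) q); lia.
- move=> i hi; rewrite size_ins; have := h2 i hi; case: (ltnP (f i) q); lia.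
- by move=> i j hi hj; rewrite !nth_ins_shift // h3.
Qed.

Lemma cont_ins_r n q t p f : q <= size t ->
  occg (size (ins n q t)) (fun x => nth 0 (ins n q t) x) p f ->
  (forall i, i < size p -> f i != q) -> cont t p.
Proof.
move=> hq [h1 h2 h3] hne.
exists (fun i => if f i < q then f i else (f i).-1); split.
- move=> i j hij hj; have hi : i < size p by lia.
  have := h1 i j hij hj; have := hne i hi; have := hne j hj.
  case: (ltnP (f i) q); case: (ltnP (f j) q); lia.
- move=> i hi; have := h2 i hi; have := hne i hi; rewrite size_ins.
  case: (ltnP (f i) q); lia.
- move=> i j hi hj; rewrite -h3 //.
  have E : forall x, x != q -> nth 0 (ins n q t) x = nth 0 t (if x < q then x else x.-1).
    move=> x hx; rewrite nth_ins //; case: ltnP => // _.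
    by rewrite (negbTE hx).
  by rewrite !E ?hne.
Qed.

Lemma ins_le n q t j : q <= size t -> (forall x, x \in t -> x < n) ->
  nth 0 (ins n q t) j <= n.
Proof.
move=> hq ht; rewrite nth_ins //.
have H : forall y, nth 0 t y <= n.
  move=> y; case: (ltnP y (size t)) => hy; first exact: ltnW (ht _ (mem_nth 0 hy)).
  by rewrite nth_default.
case: ltnP => _; first exact: H.
by case: eqP => _.
Qed.

Lemma occ_max n q t p f i : q <= size t -> (forall x, x \in t -> x < n) ->
  occg (size (ins n q t)) (fun x => nth 0 (ins n q t) x) p f ->
  i < size p -> f i = q -> forall j, j < size p -> ~~ (nth 0 p i < nth 0 p j).
Proof.
move=> hq ht [h1 h2 h3] hi hfi j hj.
rewrite -h3 // hfi nth_ins // ltnn eqxx -leqNgt.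
exact: ins_le.
Qed.

Lemma beq_lt a b (c : bool) : (c -> a < b) -> (a < b -> c) -> (a < b) = c.
Proof. by case: c => h1 h2; [apply: h1 | apply/negbTE/negP => /h2]. Qed.

Lemma cont123 (u : seq nat) i1 i2 i3 : i1 < i2 -> i2 < i3 -> i3 < size u ->
  nth 0 u i1 < nth 0 u i2 -> nth 0 u i2 < nth 0 u i3 -> cont u pat123.
Proof.
move=> a b c d e; exists (fun i => nth 0 [:: i1; i2; i3] i); split.
- by move=> [|[|[|i]]] [|[|[|j]]] //= _ _; lia.
- by move=> [|[|[|i]]] //= _; lia.
- by move=> [|[|[|i]]] [|[|[|j]]] //= _ _; apply: beq_lt => //; lia.
Qed.

Lemma cont3214 (u : seq nat) i1 i2 i3 i4 : i1 < i2 -> i2 < i3 -> i3 < i4 -> i4 < size u ->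
  nth 0 u i3 < nth 0 u i2 -> nth 0 u i2 < nth 0 u i1 -> nth 0 u i1 < nth 0 u i4 ->
  cont u pat3214.
Proof.
move=> a b c d e f g; exists (fun i => nth 0 [:: i1; i2; i3; i4] i); split.
- by move=> [|[|[|[|i]]]] [|[|[|[|j]]]] //= _ _; lia.
- by move=> [|[|[|[|i]]]] //= _; lia.
- by move=> [|[|[|[|i]]]] [|[|[|[|j]]]] //= _ _; apply: beq_lt => //; lia.
Qed.

Lemma size_sigma k : size (sigma_k k) = (k.-1).+2.
Proof. by rewrite /sigma_k size_cat size_map size_iota. Qed.

Lemma nth_sigma k j : 2 <= j <= k ->
  nth 0 (sigma_k k) j = k.+3 - j.
Proof.
move=> hj; rewrite /sigma_k nth_cat /=.
have -> : (j < 2) = false by lia.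
rewrite (nth_map 0) ?size_iota; last by lia.
rewrite nth_iota; lia.
Qed.

Section Char.
Variables (n : nat) (t : seq nat).
Hypothesis ht : perm_eq t (iota 0 n).

Lemma t_size : size t = n.
Proof. by rewrite (perm_size ht) size_iota. Qed.

Lemma t_mem x : (x \in t) = (x < n).
Proof. by rewrite (perm_mem ht) mem_iota. Qed.

Lemma t_lt i : i < n -> nth 0 t i < n.
Proof. by move=> hi; rewrite -t_mem mem_nth ?t_size. Qed.

Lemma t_neq i j : i < n -> j < n -> i != j -> nth 0 t i != nth 0 t j.
Proof.
move=> hi hj hij; rewrite nth_uniq ?t_size //.
by rewrite (perm_uniq ht) iota_uniq.
Qed.

Lemma t_ltn x : x \in t -> x < n.
Proof. by rewrite t_mem. Qed.

Lemma u_lo q j : q <= n -> j < q -> nth 0 (ins n q t) j = nth 0 t j.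
Proof. by move=> hq hj; rewrite nth_ins ?t_size ?hj. Qed.

Lemma u_q q : q <= n -> nth 0 (ins n q t) q = n.
Proof. by move=> hq; rewrite nth_ins ?t_size // ltnn eqxx. Qed.

Lemma u_hi q j : q <= n -> q < j -> nth 0 (ins n q t) j = nth 0 t j.-1.
Proof.
move=> hq hj; rewrite nth_ins ?t_size //.
have -> : (j < q) = false by lia.
by have -> : (j == q) = false by lia.
Qed.

Lemma u_size q : size (ins n q t) = n.+1.
Proof. by rewrite size_ins t_size. Qed.

End Char.

Lemma big_q n (t : seq nat) q : perm_eq t (iota 0 n) -> 3 <= q -> q <= n ->
  cont (ins n q t) pat123 \/ cont (ins n q t) pat3214.
Proof.
move=> ht h3 hq.
set u := ins n q t.
have e0 : nth 0 u 0 = nth 0 t 0 by rewrite /u u_lo //; lia.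
have e1 : nth 0 u 1 = nth 0 t 1 by rewrite /u u_lo //; lia.
have e2 : nth 0 u 2 = nth 0 t 2 by rewrite /u u_lo //; lia.
have eqq : nth 0 u q = n by rewrite /u u_q.
have sz : size u = n.+1 by rewrite /u u_size.
have l0 : nth 0 t 0 < n by apply: (t_lt ht); lia.
have l1 : nth 0 t 1 < n by apply: (t_lt ht); lia.
have l2 : nth 0 t 2 < n by apply: (t_lt ht); lia.
have n01 : nth 0 t 0 != nth 0 t 1 by apply: (t_neq ht); lia.
have n12 : nth 0 t 1 != nth 0 t 2 by apply: (t_neq ht); lia.
case: (ltngtP (nth 0 t 0) (nth 0 t 1)) => h01; last by rewrite h01 eqxx in n01.
  by left; apply: (@cont123 u 0 1 q) => //; rewrite ?e0 ?e1 ?eqq ?sz //; lia.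
case: (ltngtP (nth 0 t 1) (nth 0 t 2)) => h12; last by rewrite h12 eqxx in n12.
  by left; apply: (@cont123 u 1 2 q) => //; rewrite ?e1 ?e2 ?eqq ?sz //; lia.
by right; apply: (@cont3214 u 0 1 2 q) => //; rewrite ?e0 ?e1 ?e2 ?eqq ?sz //; lia.
Qed.

Lemma sigma_build k n (t : seq nat) : 3 <= k -> perm_eq t (iota 0 n) -> 2 <= n ->
  nth 0 t 1 < nth 0 t 0 -> nth 0 t 0 + k <= n.+1 -> ~ cont (ins n 2 t) pat123 ->
  cont (ins n 2 t) (sigma_k k).
Proof.
move=> hk ht hn h10 hbig no123.
set u := ins n 2 t; set t0 := nth 0 t 0; set t1 := nth 0 t 1.
have e0 : nth 0 u 0 = t0 by rewrite /u u_lo.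
have e1 : nth 0 u 1 = t1 by rewrite /u u_lo.
have e2 : nth 0 u 2 = n by rewrite /u u_q.
have sz : size u = n.+1 by rewrite /u u_size.
have hidx : forall v, t0 < v -> v < n ->
    nth 0 u (index v u) = v /\ 3 <= index v u < n.+1.
  move=> v hv1 hv2.
  have hv : v \in u by rewrite /u (perm_mem (perm_ins n 2 t)) inE (t_mem ht) hv2 orbT.
  have H := nth_index 0 hv; split => //.
  have := index_mem v u; rewrite hv sz => ->; rewrite andbT.
  move: H; case: (index v u) => [|[|[|m]]] //; rewrite ?e0 ?e1 ?e2; lia.
pose f j := if j <= 2 then j else index (n.+2 - j) u.
have hs : size (sigma_k k) = k.+1 by rewrite size_sigma; lia.
have hw : forall j, j <= k -> 
    nth 0 u (f j) = if j == 0 then t0 else if j == 1 then t1 else n.+2 - j.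
  move=> j hj; rewrite /f; case: j hj => [|[|[|j]]] hj /=; rewrite ?e0 ?e1 ?e2 //; first lia.
  by case: (hidx (n.+2 - j.+3)); lia.
have hf3 : forall j, 3 <= j <= k -> 3 <= f j < n.+1.
  move=> j hj; rewrite /f; have -> : (j <= 2) = false by lia.
  by case: (hidx (n.+2 - j)); lia.
have hsg : forall j, j <= k -> nth 0 (sigma_k k) j =
     if j == 0 then 2 else if j == 1 then 1 else k.+3 - j.
  move=> j hj; case: j hj => [|[|j]] hj; [by [] | by [] | rewrite nth_sigma /=; lia].
exists f; split; rewrite ?hs.
- move=> i j hij hj.
  case: (leqP j 2) => hj2; first by rewrite /f hj2; have -> : i <= 2 by lia.
  case: (leqP i 2) => hi2.
    by have := hf3 j; rewrite /f hi2; lia.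
  rewrite ltnNge; apply/negP => hle.
  have [hvi /andP [hi3 hi4]] := hidx (n.+2 - i) ltac:(lia) ltac:(lia).
  have [hvj /andP [hj3 _]] := hidx (n.+2 - j) ltac:(lia) ltac:(lia).
  move: hle; rewrite /f.
  have -> : (i <= 2) = false by lia.
  have -> : (j <= 2) = false by lia.
  rewrite leq_eqVlt => /orP [/eqP E|E].
    by move: hvi; rewrite -E hvj; lia.
  apply: no123; apply: (@cont123 u 1 (index (n.+2 - j) u) (index (n.+2 - i) u)).
  - lia.
  - exact: E.
  - by rewrite sz; lia.
  - by rewrite e1 hvj; lia.
  - by rewrite hvj hvi; lia.
- move=> i hi; rewrite sz; case: (leqP i 2) => hi2; first by rewrite /f hi2; lia.
  by have := hf3 i; lia.
- move=> i j hi hj; rewrite !hw ?hsg; try lia.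
  case: i hi => [|[|i]] hi; case: j hj => [|[|j]] hj //=; apply: beq_lt; lia.
Qed.

Definition cond k n (t : seq nat) :=
  (nth 0 t 1 < nth 0 t 0) && (n <= nth 0 t 0 + (k - 2)).

Lemma no_new n (t : seq nat) q p : perm_eq t (iota 0 n) -> q <= n -> ~ cont t p ->
  (forall f i, occg (size (ins n q t)) (fun x => nth 0 (ins n q t) x) p f ->
     i < size p -> f i = q -> (forall j, j < size p -> ~~ (nth 0 p i < nth 0 p j)) -> False) ->
  ~ cont (ins n q t) p.
Proof.
move=> ht hq nt H [f hf].
have hqs : q <= size t by rewrite (t_size ht).
case: (boolP (has (fun i => f i == q) (iota 0 (size p)))).
  case/hasP => i; rewrite mem_iota /= => hi /eqP hfi.
  apply: (H f i hf hi hfi).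
  exact: (occ_max hqs (t_ltn ht) hf hi hfi).
move/hasPn => hn; apply: nt; apply: (cont_ins_r hqs hf) => i hi.
by apply: hn; rewrite mem_iota.
Qed.

Lemma f_012 (p : seq nat) f : 2 < size p -> (forall i j, i < j -> j < size p -> f i < f j) ->
  f 2 = 2 -> f 0 = 0 /\ f 1 = 1.
Proof.
move=> hs h1 h2.
have a := h1 0 1 isT ltac:(lia); have b := h1 1 2 isT ltac:(lia).
have c := f_ge h1 (i := 1) ltac:(lia). lia.
Qed.

Lemma new123 n (t : seq nat) q : perm_eq t (iota 0 n) -> q <= n -> q <= 2 ->
  (q = 2 -> nth 0 t 1 < nth 0 t 0) -> ~ cont t pat123 -> ~ cont (ins n q t) pat123.
Proof.
move=> ht hq hq2 hc nt; apply: (no_new ht hq nt) => f i [h1 h2 h3] hi hfi hmax.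
have hle := f_ge h1 hi.
case: (leqP i 1) => hi1.
  by move: (hmax 2 isT); case: (i) hi1 => [|[|]].
have i2 : i = 2 by (rewrite /= in hi; lia).
subst i; have q2 : q = 2 by lia.
have hn2 : 2 <= n by lia.
rewrite q2 in hfi h2 h3 hc; have [f0 f1] := f_012 (p := pat123) isT h1 hfi.
have := h3 0 1 isT isT; rewrite f0 f1 !u_lo //= => E.
by have := hc erefl; lia.
Qed.

Lemma new3214 n (t : seq nat) q : perm_eq t (iota 0 n) -> q <= n -> q <= 2 ->
  ~ cont t pat3214 -> ~ cont (ins n q t) pat3214.
Proof.
move=> ht hq hq2 nt; apply: (no_new ht hq nt) => f i [h1 h2 h3] hi hfi hmax.
have hle := f_ge h1 hi.
case: (leqP i 2) => hi1.
  by move: (hmax 3 isT); case: (i) hi1 => [|[|[|]]].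
lia.
Qed.

Lemma newsigma k n (t : seq nat) q : 3 <= k -> perm_eq t (iota 0 n) -> q <= n -> q <= 2 ->
  (q = 2 -> cond k n t) -> ~ cont t (sigma_k k) -> ~ cont (ins n q t) (sigma_k k).
Proof.
move=> hk ht hq hq2 hc nt; apply: (no_new ht hq nt) => f i [h1 h2 h3] hi hfi hmax.
have hs : size (sigma_k k) = k.+1 by rewrite size_sigma; lia.
have hle := f_ge h1 hi.
rewrite hs in h1 h2 h3 hi hmax.
have s2 : nth 0 (sigma_k k) 2 = k.+1 by rewrite nth_sigma; lia.
case: (leqP i 1) => hi1.
  by move: (hmax 2 ltac:(lia)); rewrite s2; case: (i) hi1 => [|[|]] //= _; lia.
have i2 : i = 2 by lia.
subst i; have q2 : q = 2 by lia.
have hn2 : 2 <= n by lia.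
have h1' : forall i j, i < j -> j < size (sigma_k k) -> f i < f j by rewrite hs.
have hs2 : 2 < size (sigma_k k) by (rewrite hs; lia).
rewrite q2 in hfi h2 h3 hc; have [f0 f1] := f_012 hs2 h1' hfi.
move: (hc erefl) => /andP [c1 c2].
set t0 := nth 0 t 0 in c1 c2.
set u := ins n 2 t in h2 h3.
pose vl j := nth 0 u (f j).
have hv : forall j, 3 <= j <= k -> t0 < vl j < n.
  move=> j hj.
  have a : 2 < f j by (rewrite -hfi; apply: h1; lia).
  have b := h2 j ltac:(lia).
  rewrite (u_size ht) in b.
  have e : vl j = nth 0 t (f j).-1 by rewrite /vl /u (u_hi ht).
  have c : (f j).-1 < n by lia.
  have d := t_lt ht c.
  have g := h3 0 j isT ltac:(lia).
  have sj : nth 0 (sigma_k k) j = k.+3 - j by rewrite nth_sigma; lia.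
  have g0 : nth 0 u 0 = t0 by (rewrite /u u_lo //; lia).
  rewrite sj f0 g0 /= in g.
  have g' : t0 < vl j by (rewrite /vl g; lia).
  by rewrite g' e.
have vinj : forall a0 b0, 3 <= a0 <= k -> 3 <= b0 <= k -> vl a0 = vl b0 -> a0 = b0.
  move=> a0 b0 ha hb e.
  have g1 := h3 a0 b0 ltac:(lia) ltac:(lia).
  have g2 := h3 b0 a0 ltac:(lia) ltac:(lia).
  rewrite -/(vl a0) -/(vl b0) e ltnn !nth_sigma in g1 g2; lia.
have hgb : forall o : 'I_(k - 2), vl (o + 3) - t0 - 1 < n - t0 - 1.
  by move=> o; have := hv (o + 3) ltac:(have := ltn_ord o; lia); lia.
pose g (o : 'I_(k - 2)) : 'I_(n - t0 - 1) := Ordinal (hgb o).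
have ginj : injective g.
  move=> o1 o2 /(congr1 (@nat_of_ord _)) /= e; apply: ord_inj.
  have hv1 := hv (o1 + 3) ltac:(have := ltn_ord o1; lia).
  have hv2 := hv (o2 + 3) ltac:(have := ltn_ord o2; lia).
  have := vinj (o1 + 3) (o2 + 3) ltac:(have := ltn_ord o1; lia) ltac:(have := ltn_ord o2; lia) ltac:(lia).
  lia.
have := leq_card g ginj; rewrite !card_ord; lia.
Qed.

Definition Pk k := [:: pat123; pat3214; sigma_k k].

Lemma avbE k u : avb (Pk k) u =
  [&& ~~ contb u pat123, ~~ contb u pat3214 & ~~ contb u (sigma_k k)].
Proof. by rewrite /avb /= andbT. Qed.


Lemma char k n (t : seq nat) q : 3 <= k -> perm_eq t (iota 0 n) -> q <= n ->
  avb (Pk k) (ins n q t) =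
  avb (Pk k) t && ((q == 0) || (q == 1) || ((q == 2) && cond k n t)).
Proof.
move=> hk ht hq.
have hqs : q <= size t by rewrite (t_size ht).
rewrite !avbE.
apply/idP/idP.
  case/and3P => /contP a /contP b /contP c.
  have -> /= : [&& ~~ contb t pat123, ~~ contb t pat3214 & ~~ contb t (sigma_k k)].
    apply/and3P; split; apply/contP => h.
    - exact: a (cont_ins_l _ hqs h).
    - exact: b (cont_ins_l _ hqs h).
    - exact: c (cont_ins_l _ hqs h).
  case: (leqP q 2) => hq2; last first.
    by case: (big_q ht hq2 hq).
  case: q hq hqs hq2 a b c => [|[|[|q]]] hq hqs hq2 a b c //=.
  have e0 : nth 0 (ins n 2 t) 0 = nth 0 t 0 by rewrite (u_lo ht).
  have e1 : nth 0 (ins n 2 t) 1 = nth 0 t 1 by rewrite (u_lo ht).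
  have e2 : nth 0 (ins n 2 t) 2 = n by rewrite (u_q ht).
  have sz : size (ins n 2 t) = n.+1 by rewrite (u_size ht).
  have l0 : nth 0 t 0 < n by apply: (t_lt ht); lia.
  have l1 : nth 0 t 1 < n by apply: (t_lt ht); lia.
  have n01 : nth 0 t 0 != nth 0 t 1 by apply: (t_neq ht); lia.
  have h10 : nth 0 t 1 < nth 0 t 0.
    case: (ltngtP (nth 0 t 0) (nth 0 t 1)) => // h01; last by rewrite h01 eqxx in n01.
    exfalso; apply: a; apply: (@cont123 _ 0 1 2) => //; rewrite ?e0 ?e1 ?e2 ?sz //; lia.
  rewrite /cond h10 /=.
  rewrite leqNgt; apply/negP => hbig.
  apply: c; apply: sigma_build => //; lia.
case/andP => /and3P [/contP a /contP b /contP c] hc.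
have hq2 : q <= 2 by move: hc; case: q {hq hqs} => [|[|[|q]]].
have hc2 : q = 2 -> cond k n t by move=> e; move: hc; rewrite e.
apply/and3P; split; apply/contP.
- apply: new123 => // e; by case/andP: (hc2 e).
- exact: new3214.
- exact: newsigma.
Qed.
Arguments avb : simpl never.

Lemma count_PLS (P : pred (seq nat)) n :
  count P (PL n.+1) = sumn [seq count (fun q => P (ins n q t)) (iota 0 n.+1) | t <- PL n].
Proof.
rewrite /= count_flatten -map_comp; congr sumn; apply: eq_map => t /=.
by rewrite count_map.
Qed.

Lemma count_iota3 (Q : pred nat) n : (forall q, 3 <= q -> q <= n -> Q q = false) ->
  count Q (iota 0 n.+1) = Q 0 + (0 < n) * Q 1 + (1 < n) * Q 2.
Proof.
case: n => [|[|m]] H /=; rewrite ?addn0 ?muln0 ?mul1n //.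
rewrite (@eq_in_count _ _ pred0); first by rewrite count_pred0; lia.
move=> q; rewrite mem_iota => /andP [h1 h2] /=; apply: H; lia.
Qed.

Lemma sumn_count2 (T : Type) (s : seq T) (A C : pred T) (b : nat) :
  sumn [seq b * A t + C t | t <- s] = b * count A s + count C s.
Proof. by elim: s => [|x s IH] /=; rewrite ?muln0 // IH mulnDr; lia. Qed.

Lemma desc_small n (t : seq nat) : perm_eq t (iota 0 n) -> n <= 1 ->
  (nth 0 t 1 < nth 0 t 0) = false.
Proof.
move=> ht hn; apply/negbTE; rewrite -leqNgt.
case: n ht hn => [|[|m]] ht hn //.
  by have := t_size ht; case: t {ht}.
by have := t_lt ht (i := 0) isT; lia.
Qed.

Lemma head_lt n (t : seq nat) : perm_eq t (iota 0 n) -> 0 < n -> nth 0 t 0 < n.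
Proof. by move=> ht hn; apply: (t_lt ht). Qed.

Lemma ins0 n (t : seq nat) : ins n 0 t = n :: t.
Proof. by rewrite /ins take0 drop0. Qed.

Definition av k n := count (avb (Pk k)) (PL n).
Definition desc (t : seq nat) := nth 0 t 1 < nth 0 t 0.
Definition FF k n j :=
  count (fun t => avb (Pk k) t && desc t && (n <= nth 0 t 0 + j)) (PL n).

Lemma charQ k n (t : seq nat) q : 3 <= k -> perm_eq t (iota 0 n) -> q <= n ->
  avb (Pk k) (ins n q t) =
  if q == 0 then avb (Pk k) t else if q == 1 then avb (Pk k) t
  else if q == 2 then avb (Pk k) t && cond k n t else false.
Proof.
move=> hk ht hq; rewrite char //.
by case: q {hq} => [|[|[|q]]] /=; rewrite ?andbT ?andbF.
Qed.

Lemma R1 k n : 3 <= k -> av k n.+1 = (1 + (0 < n)) * av k n + FF k n (k - 2).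
Proof.
move=> hk; rewrite /av count_PLS -sumn_count2.
congr sumn; apply/eq_in_map => t; rewrite mem_PL => ht.
rewrite count_iota3; last by move=> q h3 hq; rewrite charQ //; case: q h3 {hq} => [|[|[|q]]].
rewrite /= (charQ hk ht (leq0n n)) /=.
set A := avb (Pk k) t.
case: (posnP n) => hn.
  subst n; rewrite /desc (desc_small ht) // !andbF; lia.
rewrite (charQ hk ht hn) /=.
case: (leqP n 1) => hn1.
  rewrite /desc (desc_small ht) // !andbF; lia.
rewrite (charQ hk ht hn1) /= /cond /desc andbA; lia.
Qed.

Lemma R2 k n j : 3 <= k -> j <= k - 2 -> FF k n.+1 j.+1 = (0 < n) * av k n + FF k n j.
Proof.
move=> hk hj; rewrite /FF count_PLS -sumn_count2.
congr sumn; apply/eq_in_map => t; rewrite mem_PL => ht.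
rewrite count_iota3; last by move=> q h3 hq; rewrite charQ //; case: q h3 {hq} => [|[|[|q]]].
rewrite /= (charQ hk ht (leq0n n)) /=.
set A := avb (Pk k) t.
rewrite ins0 /desc /=.
case: (posnP n) => hn.
  subst n; rewrite (desc_small ht) //= andbF.
  have -> : t = [::] by apply/size0nil; rewrite (t_size ht).
  by rewrite /= !andbF.
rewrite (charQ hk ht hn) /= (head_lt ht hn) andbT.
rewrite (u_lo ht (q := 1) (j := 0)) // (u_q ht (q := 1)) //.
have -> : (n < nth 0 t 0) = false.
  by apply/negbTE; rewrite -leqNgt; apply: ltnW; apply: head_lt.
rewrite andbF /= muln0 addn0.
have -> : (n < n + j.+1) = true by apply/idP; lia.
rewrite andbT mul1n.
case: (leqP n 1) => hn1.
  rewrite (desc_small ht hn1) !andbF /= mul0n addn0; by case: A.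
rewrite (charQ hk ht hn1) /= !(u_lo ht (q := 2)) // mul1n.
rewrite /cond -/A; case: A; case: (nth 0 t 1 < nth 0 t 0) => //=; rewrite ?addn0 ?add0n //.
rewrite addnS ltnS; case: (leqP n (nth 0 t 0 + j)) => h /=; rewrite ?andbT ?andbF //.
have -> : n <= nth 0 t 0 + (k - 2) by lia.
by [].
Qed.

Lemma FF0 k n : FF k n 0 = 0.
Proof.
rewrite /FF (@eq_in_count _ _ pred0) ?count_pred0 // => t; rewrite mem_PL => ht /=.
rewrite addn0 /desc.
case: (leqP n 1) => hn; first by rewrite (desc_small ht hn) andbF.
have -> : (n <= nth 0 t 0) = false.
  by apply/negbTE; rewrite -ltnNge; apply: head_lt => //; lia.
by rewrite andbF.
Qed.

Lemma FFn0 k j : FF k 0 j = 0.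
Proof. by rewrite /FF /= /desc /= andbF. Qed.

Lemma av0 k : av k 0 = 1.
Proof.
rewrite /av /= avbE.
have H : forall p, 0 < size p -> ~~ contb [::] p.
  by move=> p hp; apply/contP => [[f [_ h2 _]]]; have := h2 0 hp.
by rewrite !H // size_sigma.
Qed.

Lemma FF_sum k n j : 3 <= k -> j <= k - 2 ->
  FF k n j = \sum_(i < j) (i.+2 <= n) * av k (n - i.+1).
Proof.
move=> hk; elim: j n => [|j IH] n hj; first by rewrite FF0 big_ord0.
case: n => [|m].
  rewrite FFn0 big1 // => i _; by rewrite mul0n.
rewrite R2 //; last by lia.
rewrite big_ord_recl /= IH; last by lia.
congr (_ + _); first by case: m.
Qed.

Lemma av_rec k m : 3 <= k ->
  av k m.+3 + av k m.+1 + (if k <= m.+2 then av k (m.+3 - k) else 0) = 3 * av k m.+2.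
Proof.
move=> hk.
have A3 := R1 m.+2 hk; have A2 := R1 m.+1 hk.
have S2 : FF k m.+2 (k - 2) = av k m.+1 + FF k m.+1 (k - 3).
  have -> : k - 2 = (k - 3).+1 by lia.
  by rewrite R2 //; lia.
have S1 : FF k m.+1 (k - 2) = FF k m.+1 (k - 3) +
          (if k <= m.+2 then av k (m.+3 - k) else 0).
  rewrite !FF_sum //; try lia.
  have -> : k - 2 = (k - 3).+1 by lia.
  rewrite big_ord_recr /=; congr (_ + _).
  case: (leqP k m.+2) => h.
    have -> : (k - 3).+2 <= m.+1 by lia.
    by rewrite mul1n; congr av; lia.
  by have -> : ((k - 3).+2 <= m.+1) = false by lia.
rewrite /= in A3 A2.
lia.
Qed.

From mathcomp Require Import ring.
Local Open Scope ring_scope.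

Lemma sum_ind (n c : nat) (X : nat -> int) :
  \sum_(i < n.+1) (((i : nat) == c)%:Z * X i) = if (c <= n)%N then X c else 0.
Proof.
elim: n => [|n IH].
  by rewrite big_ord1 /=; case: c => [|c] /=; rewrite ?mul1r ?mul0r.
rewrite big_ord_recr /= IH.
case: (ltngtP c n.+1) => h /=.
- by rewrite -ltnS h mul0r addr0.
- have -> : (c <= n)%N = false by apply/negbTE; rewrite -ltnNge ltnW.
  by rewrite mul0r addr0.
- by subst c; rewrite ltnn mul1r add0r.
Qed.

Theorem mainTheorem9 (k : nat) (hk : (3 <= k)%N) :
  forall n : nat,
    \sum_(i < n.+1) den_coef k i *
       (Sn_count [:: pat123; pat3214; sigma_k k] (n - i))%:Z
    = num_coef k n.
Proof.
move=> n.
have hS : forall m, Sn_count [:: pat123; pat3214; sigma_k k] m = av k m.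
  by move=> m; rewrite Sn_count_PL.
pose X i := (av k (n - i))%:Z.
have E : forall i : 'I_n.+1, den_coef k i *
       (Sn_count [:: pat123; pat3214; sigma_k k] (n - i))%:Z =
    ((i : nat) == 0%N)%:Z * X i - 3 * (((i : nat) == 1%N)%:Z * X i) + ((i : nat) == 2%N)%:Z * X i
    + ((i : nat) == k)%:Z * X i.
  by move=> i; rewrite hS /X /den_coef; ring.
rewrite (eq_bigr _ (fun i _ => E i)) !big_split /= sumrN -mulr_sumr !sum_ind.
rewrite /X /num_coef; clear E X.
have hA0 := av0 k.
case: n => [|[|[|m]]] /=.
- have -> : (k <= 0)%N = false by lia.
  rewrite subn0 hA0 /=; have -> : (0 == k)%N = false by lia. by [].
- have -> : (k <= 1)%N = false by lia.
  have A1 := R1 0 hk; rewrite /= FFn0 hA0 in A1.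
  rewrite subn0 subnn A1 hA0 /=; have -> : (1 == k)%N = false by lia. by [].
- have -> : (k <= 2)%N = false by lia.
  have A1 := R1 0 hk; rewrite /= FFn0 hA0 in A1.
  have F1 : FF k 1 (k - 2) = 0%N.
    by rewrite (FF_sum 1 hk (leqnn _)) big1.
  have A2 := R1 1 hk; rewrite F1 A1 /= in A2.
  have -> : (2 - 0 = 2)%N by []. have -> : (2 - 1 = 1)%N by []. have -> : (2 - 2 = 0)%N by [].
  rewrite A2 A1 hA0 /=; have -> : (2 == k)%N = false by lia.
  by [].
have R := av_rec m hk.
have -> : (m.+3 - 0 = m.+3)%N by []. have -> : (m.+3 - 1 = m.+2)%N by lia.
have -> : (m.+3 - 2 = m.+1)%N by lia.
case: (leqP k m.+3) => h.
  case: (eqVneq k m.+3) => e.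
    subst k; have e2 : (m.+3 <= m.+2)%N = false by lia.
    rewrite e2 in R; rewrite subnn hA0 /=; lia.
  have h2 : (k <= m.+2)%N by lia.
  rewrite h2 in R; rewrite /=; lia.
have h3 : (k <= m.+2)%N = false by lia.
rewrite h3 in R; rewrite /=; lia.
Qed.
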